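(* Let $n\ge2$, $0<R<\sqrt{\tfrac38(3n-5)(2n-3)^3}$, let $u_0$ satisfy (C1)–(C6), and let $\lambda>0$ with $\lambda R<x_1$. Then there is $C>0$ such that $v(r,t):=Ce^{-\lambda^2t}r^{n-\frac32}J_\nu(\lambda r)$ satisfies $u_0\ge u^*-v(\cdot,0)$ in $B_R$.
   Context: $B_R=\{x\in\mathbb R^n:|x|<R\}$; radial functions written in $r=|x|$, subscript $r$ = radial derivative. $\alpha:=\sqrt[3]{9n-15}$, $u^*(r):=-\alpha r^{1/3}$, $\nu:=\tfrac16\sqrt{36n^2-96n+61}$, $J_\nu$ the Bessel function of the first kind of order $\nu$; $x_0>0$, $x_1\in(0,x_0)$ the first positive roots of $J_\nu$ and $J_\nu'$. Conditions on $u_0$: (C1) $u_0\in C^2(\overline{B_R}\setminus\{0\})$; (C2) $u_0$ radially symmetric; (C3) $u^*\ge u_0$; (C4) $\limsup_{r\searrow0}|r^{\frac32-n-\nu}(u^*(r)-u_0(r))|<\infty$; (C5) $u_0(R)=u^*(R)$; (C6) there is $C>0$ with $0\ge u_{0r}(r)\ge -Cr^{-2/3}$ for all $r\in(0,R)$. *)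

(* Defs.v *)
From Stdlib Require Import Reals Lra Lia ClassicalEpsilon Factorial.
Open Scope R_scope.

Definition the_real (P : R -> Prop) : R := epsilon (inhabits 0) P.

Fixpoint rprod (s : R) (m : nat) : R :=
  match m with
  | O => s
  | S k => rprod s k * (s + INR (S k))
  end.

(* Euler Gamma function (for s > 0) via Gauss' limit formula
   Gamma(s) = lim_m m! m^s / (s (s+1) ... (s+m)). *)
Definition Gamma (s : R) : R :=
  the_real (fun l => Un_cv (fun m => INR (fact m) * Rpower (INR m) s / rprod s m) l).

(* Bessel function of the first kind of real order nu, for x > 0:
   J_nu(x) = sum_k (-1)^k / (k! Gamma(k+nu+1)) (x/2)^(2k+nu). *)
Definition BesselJ (nu x : R) : R :=
  Rpower (x / 2) nu *
  the_real (fun l => infinite_sum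
    (fun k => (-1) ^ k * (x / 2) ^ (2 * k) / (INR (fact k) * Gamma (INR k + nu + 1))) l).

Definition alpha (n : nat) : R := Rpower (9 * INR n - 15) (1/3).
Definition ustar (n : nat) (r : R) : R := - alpha n * Rpower r (1/3).
Definition nu (n : nat) : R := sqrt (36 * INR n ^ 2 - 96 * INR n + 61) / 6.

Definition first_pos_root_deriv (f : R -> R) (x1 : R) : Prop :=
  0 < x1 /\ derivable_pt_lim f x1 0 /\
  (forall y, 0 < y < x1 -> exists l, derivable_pt_lim f y l) /\
  (forall y, 0 < y < x1 -> ~ derivable_pt_lim f y 0).

Definition cont_within (D : R -> Prop) (f : R -> R) (x : R) : Prop :=
  limit1_in f D (f x) x.

(* (C1) for the radial profile: u0 is C^2 on (0,R), with u0, u0', u0''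
   extending continuously to (0,R]  (i.e. C^2 on closure(B_R)\{0}).
   u1 is the radial derivative u_{0r}. *)
Definition C1_profile (Rr : R) (u0 u1 : R -> R) : Prop :=
  exists u2 : R -> R,
    (forall r, 0 < r < Rr -> derivable_pt_lim u0 r (u1 r)) /\
    (forall r, 0 < r < Rr -> derivable_pt_lim u1 r (u2 r)) /\
    (forall r, 0 < r <= Rr ->
       cont_within (fun y => 0 < y <= Rr) u0 r /\
       cont_within (fun y => 0 < y <= Rr) u1 r /\
       cont_within (fun y => 0 < y <= Rr) u2 r).

(* Main.v *)
Require Import Defs.
From Stdlib Require Import Reals Lra Lia ClassicalEpsilon Factorial.
From Coquelicot Require Import Coquelicot.
Open Scope R_scope.

Lemma the_real_eq (P : R -> Prop) l : P l -> (forall l', P l' -> l' = l) -> the_real P = l.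
Proof. intros Hl U. apply U. unfold the_real. apply epsilon_spec. eauto. Qed.

Lemma cv_const c : Un_cv (fun _ => c) c.
Proof. intros e He. exists 0%nat. intros. unfold R_dist. rewrite Rminus_diag, Rabs_R0. lra. Qed.

Lemma ln_div x y : 0 < x -> 0 < y -> ln (x / y) = ln x - ln y.
Proof. intros. unfold Rdiv. rewrite ln_mult, ln_Rinv; try lra. apply Rinv_0_lt_compat; lra. Qed.

Lemma ln_le_sub1 y : 0 < y -> ln y <= y - 1.
Proof. intro Hy. assert (H := exp_ineq1_le (y-1)).
 rewrite <- (ln_exp (y-1)). destruct (Rle_lt_or_eq_dec _ _ H) as [H'|H'].
 - left. apply ln_increasing; lra.
 - right. f_equal. lra. Qed.

Lemma ln_diff_bounds a b : 0 < a -> a <= b -> (b - a)/b <= ln b - ln a <= (b - a)/a.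
Proof. intros Ha Hab. split.
 - assert (H := ln_le_sub1 (a/b) ltac:(apply Rdiv_lt_0_compat; lra)).
   rewrite ln_div in H by lra. assert (a/b - 1 = - ((b-a)/b)) by (field; lra). lra.
 - assert (H := ln_le_sub1 (b/a) ltac:(apply Rdiv_lt_0_compat; lra)).
   rewrite ln_div in H by lra. assert (b/a - 1 = (b-a)/a) by (field; lra). lra. Qed.

Definition ga (s : R) (m : nat) : R := INR (fact m) * Rpower (INR m) s / rprod s m.

Lemma rprod_pos s m : 0 < s -> 0 < rprod s m.
Proof. intro Hs. induction m; [simpl; lra|].
 change (rprod s (S m)) with (rprod s m * (s + INR (S m))).
 apply Rmult_lt_0_compat; [lra|]. pose proof (pos_INR (S m)). lra. Qed.

Lemma ga_step s m : 0 < s ->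
  ga s (S (S m)) = ga s (S m) *
    (exp (s * (ln (INR (S (S m))) - ln (INR (S m)))) * (INR (S (S m)) / (s + INR (S (S m))))).
Proof. intro Hs. unfold ga, Rpower.
 change (rprod s (S (S m))) with (rprod s (S m) * (s + INR (S (S m)))).
 rewrite fact_simpl, mult_INR.
 assert (0 < rprod s (S m)) by (apply rprod_pos; lra).
 pose proof (pos_INR (S (S m))).
 replace (s * ln (INR (S (S m)))) with (s * ln (INR (S m)) + s * (ln (INR (S (S m))) - ln (INR (S m)))) by ring.
 rewrite exp_plus. field. split; lra. Qed.

Lemma ga1 s : 0 < s -> ga s 1 = / (s * (s+1)).
Proof. intro Hs. unfold ga, Rpower. simpl. rewrite ln_1, Rmult_0_r, exp_0. field. lra. Qed.

Lemma ratio_ge1 s m : 0 < s ->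
  1 <= exp (s * (ln (INR (S (S m))) - ln (INR (S m)))) * (INR (S (S m)) / (s + INR (S (S m)))).
Proof. intro Hs. set (b := INR (S (S m))). set (a := INR (S m)).
 assert (Ha : 1 <= a) by (unfold a; rewrite S_INR; pose proof (pos_INR m); lra).
 assert (Hb : b = a + 1) by (unfold a, b; rewrite (S_INR (S m)); ring).
 destruct (ln_diff_bounds a b) as [H1 _]; try lra.
 assert (H2 := exp_ineq1_le (s * (ln b - ln a))).
 assert (H3 : s * ((b-a)/b) <= s * (ln b - ln a)) by (apply Rmult_le_compat_l; lra).
 assert (H4 : 1 <= (1 + s * ((b-a)/b)) * (b / (s + b))).
 { right. rewrite Hb. field. lra. }
 eapply Rle_trans; [apply H4|]. apply Rmult_le_compat_r.
 - apply Rlt_le, Rdiv_lt_0_compat; lra.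
 - lra. Qed.

Lemma ratio_le s m : 0 < s ->
  exp (s * (ln (INR (S (S m))) - ln (INR (S m)))) * (INR (S (S m)) / (s + INR (S (S m))))
  <= exp (s * (s+1) * (/ INR (S m) - / INR (S (S m)))).
Proof. intro Hs. set (b := INR (S (S m))). set (a := INR (S m)).
 assert (Ha : 1 <= a) by (unfold a; rewrite S_INR; pose proof (pos_INR m); lra).
 assert (Hb : b = a + 1) by (unfold a, b; rewrite (S_INR (S m)); ring).
 destruct (ln_diff_bounds a b) as [_ H1]; try lra.
 destruct (ln_diff_bounds b (s+b)) as [H2 _]; try lra.
 assert (E : b / (s+b) = exp (- (ln (s+b) - ln b))).
 { replace (- (ln (s+b) - ln b)) with (ln (b/(s+b))) by (rewrite ln_div by lra; ring).
   rewrite exp_ln; [reflexivity|]. apply Rdiv_lt_0_compat; lra. }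
 rewrite E, <- exp_plus. destruct (Req_dec (s * (ln b - ln a) + - (ln (s + b) - ln b)) (s * (s + 1) * (/ a - / b))) as [Q|Q]; [rewrite Q; lra|].
 left. apply exp_increasing.
 assert (H3 : s * (ln b - ln a) <= s * ((b-a)/a)) by (apply Rmult_le_compat_l; lra).
 assert (H4 : s * ((b-a)/a) - (s + b - b)/(s+b) <= s * (s + 1) * (/ a - / b)).
 { rewrite Hb. replace (s * ((a+1-a)/a) - (s + (a+1) - (a+1))/(s+(a+1))) with (s*(s+1)/(a*(s+a+1))) by (field; lra).
   replace (s * (s + 1) * (/ a - / (a+1))) with (s*(s+1)/(a*(a+1))) by (field; lra).
   unfold Rdiv. apply Rmult_le_compat_l. nra. apply Rinv_le_contravar; nra. }
 lra. Qed.

Lemma ga_pos s m : 0 < s -> 0 < ga s m.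
Proof. intro Hs. unfold ga. apply Rdiv_lt_0_compat; [|apply rprod_pos; lra].
 apply Rmult_lt_0_compat. apply lt_0_INR, lt_O_fact. unfold Rpower. apply exp_pos. Qed.

Lemma ga_growing s : 0 < s -> Un_growing (fun m => ga s (S m)).
Proof. intros Hs m. simpl. rewrite (ga_step s m Hs).
 pose proof (ratio_ge1 s m Hs). pose proof (ga_pos s (S m) Hs).
 rewrite <- (Rmult_1_r (ga s (S m))) at 1. apply Rmult_le_compat_l; lra. Qed.

Lemma ga_upper s m : 0 < s -> ga s (S m) <= ga s 1 * exp (s * (s+1) * (1 - / INR (S m))).
Proof. intro Hs. induction m.
 - replace (1 - / INR 1) with 0 by (simpl; field). rewrite Rmult_0_r, exp_0. lra.
 - rewrite (ga_step s m Hs). pose proof (ratio_le s m Hs).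
   pose proof (ga_pos s (S m) Hs).
   apply Rle_trans with (ga s 1 * exp (s * (s + 1) * (1 - / INR (S m))) * exp (s * (s + 1) * (/ INR (S m) - / INR (S (S m))))).
   + apply Rmult_le_compat; try lra. left. apply Rmult_lt_0_compat; [apply exp_pos|]. pose proof (pos_INR (S m)). apply Rdiv_lt_0_compat; rewrite (S_INR (S m)); lra.
   + rewrite Rmult_assoc, <- exp_plus. right. f_equal. f_equal. ring. Qed.

Lemma Gamma_bounds s : 0 < s -> / (s * (s+1)) <= Gamma s <= exp (s * (s+1)) / (s * (s+1)).
Proof. intro Hs. set (b := fun m => ga s (S m)).
 assert (Hg := ga_growing s Hs).
 assert (Hub : forall m, b m <= ga s 1 * exp (s * (s+1))).
 { intro m. unfold b. eapply Rle_trans; [apply ga_upper; lra|].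
   apply Rmult_le_compat_l; [pose proof (ga_pos s 1 Hs); lra|].
   destruct (Rle_lt_or_eq_dec (s * (s + 1) * (1 - / INR (S m))) (s * (s + 1))) as [H|H].
   - assert (0 < / INR (S m)) by (apply Rinv_0_lt_compat, lt_0_INR; lia).
     assert (0 < s * (s+1)) by nra. nra.
   - left. apply exp_increasing; lra.
   - rewrite H; lra. }
 assert (Hb : has_ub b). { exists (ga s 1 * exp (s * (s+1))). intros x [m ->]. apply Hub. }
 destruct (growing_cv b Hg Hb) as [l Hl].
 assert (Hl' : Un_cv (ga s) l).
 { apply (CV_shift _ 1). intros e He. destruct (Hl e He) as [N HN]. exists N. intros n Hn.
   rewrite Nat.add_1_r. apply HN; lia. }
 assert (E : Gamma s = l).
 { unfold Gamma. apply the_real_eq; [exact Hl'|]. intros l' H'. exact (UL_sequence _ _ _ H' Hl'). }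
 rewrite E. rewrite ga1 in Hub by lra. split.
 - rewrite <- (ga1 s Hs). exact (growing_ineq b l Hg Hl 0).
 - replace (exp (s * (s+1)) / (s * (s+1))) with (/ (s * (s + 1)) * exp (s * (s + 1))) by (field; nra).
   exact (Rle_cv_lim Hub Hl (cv_const _)). Qed.

Lemma fact_bound k : (k * (k+1) <= 3 * fact k)%nat \/ k = 0%nat.
Proof. induction k as [|k IH]; [right; reflexivity|left].
 destruct IH as [IH| ->]; [|simpl; lia].
 destruct (Nat.eq_dec k 0) as [->|Hk0]; [simpl; lia|].
 rewrite fact_simpl. assert (1 <= k)%nat by lia.
 assert (k <= fact k)%nat. { clear. induction k; [simpl; lia|rewrite fact_simpl]. pose proof (lt_O_fact k). nia. }
 assert (k + 2 <= 3 * fact k)%nat by lia. nia. Qed.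

Lemma s_bound (nu : R) k : 0 <= nu ->
  (INR k + nu + 1) * (INR k + nu + 1 + 1) <= 3 * (nu + 2)^2 * INR (fact k).
Proof. intro Hnu. destruct (Nat.eq_dec k 0) as [->|Hk0]; [simpl; nra|].
 destruct (fact_bound k) as [H| ->]; [|lia].
 - assert (Hk : 1 <= INR k). { destruct k; [lia|]. rewrite S_INR; pose proof (pos_INR k); lra. }
   apply le_INR in H. rewrite !mult_INR, plus_INR in H. simpl (INR 1) in H. simpl (INR 3) in H.
   set (a := nu + 1). assert (a + 1 = nu + 2) by (unfold a; ring).
   assert (H1 : INR k + a <= INR k * (1 + a)) by (unfold a; nra).
   assert (H2 : INR k + a + 1 <= (INR k + 1) * (1 + a)) by (unfold a; nra).
   unfold a in *. 
   apply Rle_trans with ((INR k * (1 + (nu+1))) * ((INR k + 1) * (1 + (nu+1)))).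
   + apply Rmult_le_compat; try lra.
   + replace ((INR k * (1 + (nu + 1))) * ((INR k + 1) * (1 + (nu + 1)))) with ((nu+2)^2 * (INR k * (INR k + 1))) by ring.
     replace (3 * (nu + 2) ^ 2 * INR (fact k)) with ((nu+2)^2 * (3 * INR (fact k))) by ring.
     apply Rmult_le_compat_l; [nra|lra]. Qed.

Definition bt (nu x : R) (k : nat) : R :=
  (-1) ^ k * (x / 2) ^ (2 * k) / (INR (fact k) * Gamma (INR k + nu + 1)).

Lemma bt_bound nu x k : 0 <= nu ->
  Rabs (bt nu x k) <= 3 * (nu + 2)^2 * ((x/2)^2)^k.
Proof. intro Hnu. unfold bt. set (s := INR k + nu + 1).
 assert (Hs : 1 <= s) by (unfold s; pose proof (pos_INR k); lra).
 destruct (Gamma_bounds s) as [G1 _]; [lra|].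
 assert (Hf : 0 < INR (fact k)) by (apply lt_0_INR, lt_O_fact).
 assert (HG : 0 < Gamma s). { eapply Rlt_le_trans; [|exact G1]. apply Rinv_0_lt_compat; nra. }
 rewrite <- pow_mult. set (y := (x/2)^(2*k)).
 assert (Hy : 0 <= y) by (unfold y; rewrite pow_mult; apply pow_le, pow2_ge_0).
 assert (HFG : 0 < INR (fact k) * Gamma s) by nra.
 unfold Rdiv. rewrite !Rabs_mult, pow_1_abs, Rmult_1_l, (Rabs_right y) by lra.
 rewrite Rabs_Rinv, (Rabs_right (INR (fact k) * Gamma s)) by lra.
 rewrite Rmult_comm. apply Rmult_le_compat_r; [exact Hy|].
 pose proof (s_bound nu k Hnu). fold s in H.
 apply Rle_trans with (s * (s+1) / INR (fact k)).
 - rewrite Rinv_mult. unfold Rdiv. rewrite (Rmult_comm (s * (s+1))). apply Rmult_le_compat_l.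
   + left; apply Rinv_0_lt_compat; lra.
   + replace (s * (s+1)) with (/ / (s * (s+1))) by (field; nra).
     apply Rinv_le_contravar; [apply Rinv_0_lt_compat; nra|exact G1].
 - apply (Rmult_le_reg_r (INR (fact k))); [lra|]. unfold Rdiv. rewrite Rmult_assoc, Rinv_l by lra. lra. Qed.

Lemma geom_ex (c q : R) : 0 <= q < 1 -> ex_series (fun k => c * q ^ k).
Proof. intro Hq. apply (ex_series_scal_l c (fun k => q ^ k)). apply ex_series_geom. rewrite Rabs_right; lra. Qed.

Lemma S_bound nu x : 0 <= nu -> (x/2)^2 <= 1/2 ->
  Rabs (the_real (fun l => infinite_sum (bt nu x) l) - / Gamma (nu + 1))
   <= 2 * (3 * (nu + 2)^2) * (x/2)^2.
Proof. intros Hnu Hq. set (q := (x/2)^2) in *. set (B := 3 * (nu+2)^2).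
 assert (Hq0 : 0 <= q) by (unfold q; apply pow2_ge_0).
 assert (HB : 0 <= B) by (unfold B; nra).
 assert (Hb := fun k => bt_bound nu x k Hnu). fold q B in Hb.
 assert (Habs : ex_series (fun k => Rabs (bt nu x k))).
 { apply (@ex_series_le R_AbsRing R_CompleteNormedModule _ (fun k => B * q ^ k)); [|apply geom_ex; lra].
   intro k. change (norm (Rabs (bt nu x k))) with (Rabs (Rabs (bt nu x k))). rewrite Rabs_Rabsolu. apply Hb. }
 assert (Hex : ex_series (bt nu x)) by (apply ex_series_Rabs; exact Habs).
 assert (E : the_real (fun l => infinite_sum (bt nu x) l) = Series (bt nu x)).
 { apply the_real_eq. apply is_series_Reals, Series_correct, Hex.
   intros l' H'. apply (uniqueness_sum (bt nu x)); [exact H'|]. apply is_series_Reals, Series_correct, Hex. }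
 rewrite E, Series_incr_1 by exact Hex.
 assert (E0 : bt nu x 0 = / Gamma (nu + 1)).
 { unfold bt. simpl. replace (0 + nu + 1) with (nu + 1) by ring. field.
   destruct (Gamma_bounds (nu+1)) as [G1 _]; [lra|]. assert (0 < / ((nu+1) * (nu+1+1))) by (apply Rinv_0_lt_compat; nra). lra. }
 rewrite E0. replace (/ Gamma (nu + 1) + Series (fun k => bt nu x (S k)) - / Gamma (nu + 1)) with (Series (fun k => bt nu x (S k))) by ring.
 assert (Habs1 : ex_series (fun k => Rabs (bt nu x (S k)))).
 { apply (ex_series_incr_1 (fun k => Rabs (bt nu x k))). exact Habs. }
 eapply Rle_trans; [apply Series_Rabs; exact Habs1|].
 eapply Rle_trans. { apply (Series_le _ (fun k => (B * q) * q ^ k)); [|apply geom_ex; lra].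
   intro k. split; [apply Rabs_pos|]. rewrite Rmult_assoc, tech_pow_Rmult. apply Hb. }
 rewrite Series_scal_l, Series_geom by (rewrite Rabs_right; lra).
 replace (2 * B * q) with ((B * q) * 2) by ring. apply Rmult_le_compat_l; [nra|].
 replace 2 with (/ / 2) by field. apply Rinv_le_contravar; lra. Qed.

Lemma J_bounds nu : 0 <= nu -> exists xs a b, 0 < xs /\ 0 < a /\ 0 < b /\
  forall x, 0 < x <= xs -> a * Rpower (x/2) nu <= BesselJ nu x <= b * Rpower (x/2) nu.
Proof. intro Hnu. set (s0 := nu + 1). set (c0 := s0 * (s0+1) / exp (s0 * (s0+1))).
 set (d0 := s0 * (s0+1)). set (B := 3 * (nu+2)^2).
 assert (Hs0 : 1 <= s0) by (unfold s0; lra).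
 assert (Hd0 : 0 < d0) by (unfold d0; nra).
 assert (Hc0 : 0 < c0) by (unfold c0; apply Rdiv_lt_0_compat; [nra|apply exp_pos]).
 assert (HB : 0 < B) by (unfold B; nra).
 set (qs := Rmin (1/2) (c0 / (4 * B))).
 assert (Hqs : 0 < qs) by (unfold qs; apply Rmin_glb_lt; [lra|apply Rdiv_lt_0_compat; lra]).
 destruct (Gamma_bounds s0) as [G1 G2]; [lra|].
 assert (HG : 0 < Gamma s0) by (eapply Rlt_le_trans; [|exact G1]; apply Rinv_0_lt_compat; nra).
 assert (T1 : c0 <= / Gamma s0).
 { unfold c0. replace (s0 * (s0 + 1) / exp (s0 * (s0 + 1))) with (/ (exp (s0 * (s0 + 1)) / (s0 * (s0 + 1)))).
   - apply Rinv_le_contravar; assumption.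
   - pose proof (exp_pos (s0 * (s0 + 1))). field; repeat split; lra. }
 assert (T2 : / Gamma s0 <= d0).
 { unfold d0. replace (s0 * (s0+1)) with (/ / (s0 * (s0+1))) by (field; nra).
   apply Rinv_le_contravar; [apply Rinv_0_lt_compat; nra|exact G1]. }
 exists (2 * sqrt qs), (c0/2), (d0 + c0/2). split; [pose proof (sqrt_lt_R0 qs Hqs); lra|].
 split; [lra|]. split; [lra|].
 intros x Hx. 
 assert (Hq : (x/2)^2 <= qs).
 { assert (0 <= x/2 <= sqrt qs) by lra. replace qs with (sqrt qs ^ 2) by (rewrite pow2_sqrt; lra). 
   apply pow_incr; lra. }
 assert (Hq2 : (x/2)^2 <= 1/2) by (eapply Rle_trans; [exact Hq|apply Rmin_l]).
 assert (Hq3 : 2 * B * (x/2)^2 <= c0/2).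
 { assert ((x/2)^2 <= c0/(4*B)) by (eapply Rle_trans; [exact Hq|apply Rmin_r]).
   apply (Rmult_le_compat_l (2*B)) in H; [|lra]. replace (2 * B * (c0 / (4 * B))) with (c0/2) in H by (field; lra). lra. }
 pose proof (S_bound nu x Hnu Hq2) as HS. fold B in HS. fold s0 in HS.
 set (S := the_real (fun l => infinite_sum (bt nu x) l)) in HS.
 assert (EJ : BesselJ nu x = Rpower (x/2) nu * S) by reflexivity.
 assert (HP : 0 < Rpower (x/2) nu) by (unfold Rpower; apply exp_pos).
 rewrite EJ. apply Rabs_le_between' in HS. split.
 - rewrite (Rmult_comm (Rpower _ _)). apply Rmult_le_compat_r; lra.
 - rewrite (Rmult_comm (Rpower _ _) S). apply Rmult_le_compat_r; lra. Qed.

Lemma cont_of_deriv (J : R -> R) x1 : first_pos_root_deriv J x1 ->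
  forall c, 0 < c <= x1 -> continuity_pt J c.
Proof. intros [H0 [Hx1 [Hd _]]] c Hc. destruct (Req_dec c x1) as [->|Hne].
 - apply derivable_continuous_pt. exact (exist _ 0 Hx1).
 - destruct (Hd c ltac:(lra)) as [l Hl]. apply derivable_continuous_pt. exact (exist _ l Hl). Qed.

Lemma small_rho (a b nu : R) : 0 < a -> 0 < b -> 0 < nu ->
  exists rho, 0 < rho < 1 /\ b * Rpower rho nu < a.
Proof. intros Ha Hb Hnu. set (L := ln (b / a)). set (t := (Rabs L + 1) / nu).
 exists (exp (- t)). assert (Ht : 0 < t) by (unfold t; apply Rdiv_lt_0_compat; [pose proof (Rabs_pos L)|]; lra).
 split; [split; [apply exp_pos|]|].
 - rewrite <- exp_0. apply exp_increasing. lra.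
 - unfold Rpower. rewrite ln_exp. replace (nu * - t) with (- Rabs L - 1) by (unfold t; field; lra).
   assert (exp (- Rabs L - 1) < exp (- L)). { apply exp_increasing. pose proof (Rle_abs L). lra. }
   assert (E : exp (- L) = a / b).
   { unfold L. rewrite exp_Ropp, exp_ln by (apply Rdiv_lt_0_compat; lra). field. lra. }
   rewrite E in H. apply (Rmult_lt_compat_l b) in H; [|lra].
   replace (b * (a / b)) with a in H by (field; lra). exact H. Qed.

Lemma J_pos (J : R -> R) nu x1 xs a b :
  0 < nu -> 0 < xs -> 0 < a -> 0 < b ->
  (forall x, 0 < x <= xs -> a * Rpower (x/2) nu <= J x <= b * Rpower (x/2) nu) ->
  first_pos_root_deriv J x1 ->
  forall y, 0 < y < x1 -> 0 < J y.
Proof. intros Hnu Hxs Ha Hb HJ Hroot y Hy.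
 pose proof Hroot as [Hx10 [_ [Hd Hnd]]].
 set (eta := Rmin xs (x1/2)).
 assert (He : 0 < eta <= xs /\ eta < x1).
 { unfold eta. split; [split|]; [apply Rmin_glb_lt; lra|apply Rmin_l|]. eapply Rle_lt_trans; [apply Rmin_r|lra]. }
 assert (Pe : 0 < Rpower (eta/2) nu) by (unfold Rpower; apply exp_pos).
 destruct (Rle_dec y eta) as [Hye|Hye].
 - destruct (HJ y) as [H1 _]; [lra|]. assert (0 < Rpower (y/2) nu) by (unfold Rpower; apply exp_pos). nra.
 - destruct (Rlt_le_dec 0 (J y)) as [Hp|Hn]; [exact Hp|exfalso].
   destruct (small_rho a b nu Ha Hb Hnu) as [rho [Hr Hrb]].
   set (eps := rho * eta).
   assert (Heps : 0 < eps < eta) by (unfold eps; nra).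
   assert (Jeps : J eps < J eta).
   { destruct (HJ eps) as [_ H1]; [lra|]. destruct (HJ eta) as [H2 _]; [lra|].
     assert (E : Rpower (eps/2) nu = Rpower rho nu * Rpower (eta/2) nu).
     { rewrite Rpower_mult_distr by lra. unfold eps. f_equal. field. }
     rewrite E in H1. nra. }
   destruct (continuity_ab_maj J eps y) as [c [Hc1 Hc2]]; [lra|intros; apply (cont_of_deriv J x1 Hroot); lra|].
   assert (Jc : J eta <= J c) by (apply Hc1; lra).
   assert (Hc : eps < c < y).
   { split; destruct (Rle_lt_or_eq_dec _ _ (proj1 Hc2)); destruct (Rle_lt_or_eq_dec _ _ (proj2 Hc2)); subst; try lra.
     all: assert (0 < a * Rpower (eta/2) nu) by nra; destruct (HJ eta) as [H2 _]; lra. }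
   destruct (Hd c ltac:(lra)) as [l Hl].
   assert (Hl0 : derive_pt J c (exist _ l Hl) = 0).
   { apply (deriv_maximum J eps y c); try lra. intros z Hz1 Hz2. apply Hc1; lra. }
   rewrite (derive_pt_eq_0 J c l (exist _ l Hl) Hl) in Hl0. subst l.
   apply (Hnd c); [lra|exact Hl]. Qed.

Lemma u0_mono Rr u0 u0r : C1_profile Rr u0 u0r ->
  (forall r, 0 < r < Rr -> u0r r <= 0) -> forall r, 0 < r < Rr -> u0 Rr <= u0 r.
Proof. intros [u2 [Hd [_ Hc]]] Hneg r Hr.
 assert (Hm : forall y, r < y < Rr -> u0 y <= u0 r).
 { intros y Hy. destruct (MVT_cor2 u0 u0r r y) as [c [Hc1 Hc2]]; [lra| |].
   - intros c Hc'. apply Hd. lra.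
   - assert (u0r c <= 0) by (apply Hneg; lra). nra. }
 destruct (Hc Rr ltac:(lra)) as [HcR _].
 destruct (Rle_lt_dec (u0 Rr) (u0 r)) as [H|H]; [exact H|exfalso].
 destruct (HcR (u0 Rr - u0 r) ltac:(lra)) as [al [Hal Hal2]].
 set (y := Rmax r (Rr - al/2)).
 set (z := (y + Rr)/2).
 assert (Hy1 : r <= y) by apply Rmax_l. assert (Hy2 : Rr - al/2 <= y) by apply Rmax_r.
 assert (Hy3 : y < Rr) by (unfold y; apply Rmax_lub_lt; lra).
 assert (Hz : r < z < Rr) by (unfold z; lra).
 specialize (Hal2 z). simpl in Hal2. unfold R_dist in Hal2.
 assert (Hd1 : Rabs (z - Rr) < al) by (rewrite Rabs_left by lra; unfold z; lra).
 assert (HD : 0 < z <= Rr) by lra. specialize (Hal2 (conj HD Hd1)).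
 assert (u0 z <= u0 r) by (apply Hm; lra).
 apply Rabs_def2 in Hal2. lra. Qed.

Lemma Rpower_pos x y : 0 < Rpower x y.
Proof. unfold Rpower; apply exp_pos. Qed.

Theorem mainTheorem10
  (n : nat) (Rr : R) (u0 u0r : R -> R) (lambda x1 : R) :
  (2 <= n)%nat ->
  0 < Rr ->
  Rr < sqrt (3 / 8 * (3 * INR n - 5) * (2 * INR n - 3) ^ 3) ->
  C1_profile Rr u0 u0r ->
  (forall r, 0 < r <= Rr -> ustar n r >= u0 r) ->
  (exists M delta, 0 < delta /\ forall r, 0 < r < delta -> r <= Rr ->
     Rabs (Rpower r (3/2 - INR n - nu n) * (ustar n r - u0 r)) <= M) ->
  u0 Rr = ustar n Rr ->
  (exists C, 0 < C /\ forall r, 0 < r < Rr ->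
     0 >= u0r r /\ u0r r >= - C * Rpower r (- (2/3))) ->
  first_pos_root_deriv (BesselJ (nu n)) x1 ->
  0 < lambda -> lambda * Rr < x1 ->
  exists C, 0 < C /\
    forall r, 0 < r < Rr ->
      u0 r >= ustar n r -
        C * exp (- lambda ^ 2 * 0) * Rpower r (INR n - 3/2) * BesselJ (nu n) (lambda * r).
Proof.
 intros Hn HR _ HC1 _ [M [d4 [Hd4 HM]]] H5 [C6 [_ H6]] Hroot Hl HlR.
 assert (Hn2 : 2 <= INR n) by (apply le_INR in Hn; simpl in Hn; lra).
 set (nv := nu n).
 assert (Hnv : 0 < nv).
 { unfold nv, nu. apply Rdiv_lt_0_compat; [|lra]. apply sqrt_lt_R0. nra. }
 destruct (J_bounds nv) as [xs [a [b [Hxs [Ha [Hb HJ]]]]]]; [lra|].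
 set (J := BesselJ nv).
 assert (Jpos := J_pos J nv x1 xs a b Hnv Hxs Ha Hb HJ Hroot).
 pose proof Hroot as [Hx10 _].
 set (delta := Rmin (Rmin (xs / lambda) d4) Rr / 2).
 assert (Hdel : 0 < delta /\ delta < Rr /\ lambda * delta < xs /\ delta < d4).
 { assert (0 < xs / lambda) by (apply Rdiv_lt_0_compat; lra).
   assert (h1 : 0 < Rmin (Rmin (xs / lambda) d4) Rr) by (repeat apply Rmin_glb_lt; lra).
   assert (h2 := Rmin_r (Rmin (xs / lambda) d4) Rr).
   assert (h3 := Rmin_l (Rmin (xs / lambda) d4) Rr).
   assert (h4 := Rmin_l (xs / lambda) d4). assert (h5 := Rmin_r (xs / lambda) d4).
   unfold delta. repeat split; try lra.
   assert (delta_le : Rmin (Rmin (xs / lambda) d4) Rr / 2 < xs / lambda) by lra.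
   apply (Rmult_lt_compat_l lambda) in delta_le; [|lra].
   replace (lambda * (xs / lambda)) with xs in delta_le by (field; lra). exact delta_le. }
 destruct Hdel as [Hd0 [HdR [Hdx Hdd4]]].
 destruct (continuity_ab_min J (lambda * delta) (lambda * Rr)) as [m [Hm1 Hm2]].
 { nra. }
 { intros c Hc. apply (cont_of_deriv J x1 Hroot). nra. }
 assert (HJm : 0 < J m) by (apply Jpos; nra).
 set (K1 := alpha n * Rpower Rr (1/3)).
 assert (HK1 : 0 < K1) by (unfold K1, alpha; apply Rmult_lt_0_compat; apply Rpower_pos).
 set (P := Rpower delta (INR n - 3/2)).
 assert (HP : 0 < P) by apply Rpower_pos.
 set (A := a * Rpower (lambda/2) nv).
 assert (HA : 0 < A) by (unfold A; apply Rmult_lt_0_compat; [lra|apply Rpower_pos]).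
 set (C := 1 + Rabs M / A + K1 / (P * J m)).
 assert (HC1' : 0 <= Rabs M / A) by (apply Rmult_le_pos; [apply Rabs_pos|left; apply Rinv_0_lt_compat; lra]).
 assert (HC2' : 0 < K1 / (P * J m)) by (apply Rdiv_lt_0_compat; [lra|nra]).
 exists C. split; [unfold C; lra|].
 intros r Hr. rewrite Rmult_0_r, exp_0, Rmult_1_r. fold nv J.
 set (Q := Rpower r (INR n - 3/2)).
 assert (HQ : 0 < Q) by apply Rpower_pos.
 destruct (Rlt_le_dec r delta) as [Hrd|Hrd].
 -
   set (E := Rpower r (3/2 - INR n - nv) * (ustar n r - u0 r)).
   assert (HE : E <= Rabs M) by (eapply Rle_trans; [apply Rle_abs|]; eapply Rle_trans; [apply HM; lra|apply Rle_abs]).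
   assert (EU : ustar n r - u0 r = E * (Q * Rpower r nv)).
   { unfold E, Q. rewrite <- Rpower_plus, Rmult_assoc, (Rmult_comm (ustar n r - u0 r)), <- Rmult_assoc, <- Rpower_plus.
     replace (3 / 2 - INR n - nv + (INR n - 3 / 2 + nv)) with 0 by ring. rewrite Rpower_O by lra. ring. }
   assert (HJr : A * Rpower r nv <= J (lambda * r)).
   { destruct (HJ (lambda * r)) as [H1 _]; [split; nra|].
     unfold A. rewrite Rmult_assoc, Rpower_mult_distr by lra.
     replace (lambda / 2 * r) with (lambda * r / 2) by field. exact H1. }
   assert (Hrn : 0 < Rpower r nv) by apply Rpower_pos.
   assert (H1 : ustar n r - u0 r <= Rabs M * (Q * Rpower r nv)).
   { rewrite EU. apply Rmult_le_compat_r; [nra|exact HE]. }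
   assert (H2 : Rabs M * (Q * Rpower r nv) <= C * Q * J (lambda * r)).
   { assert (Rabs M <= C * A).
     { assert (EM : Rabs M = (Rabs M / A) * A) by (field; lra). rewrite EM at 1.
       apply Rmult_le_compat_r; [lra|]. unfold C; lra. }
     apply Rle_trans with (C * A * (Q * Rpower r nv)).
     - apply Rmult_le_compat_r; nra.
     - replace (C * A * (Q * Rpower r nv)) with ((C * Q) * (A * Rpower r nv)) by ring.
       apply Rmult_le_compat_l; [unfold C; nra|exact HJr]. }
   lra.
 -
   assert (H1 : ustar n r - u0 r <= K1).
   { assert (u0 Rr <= u0 r).
     { apply (u0_mono Rr u0 u0r HC1); [|lra]. intros y Hy. destruct (H6 y Hy); lra. }
     assert (ustar n r <= 0).
     { unfold ustar, alpha. pose proof (Rpower_pos (9 * INR n - 15) (1/3)). pose proof (Rpower_pos r (1/3)). nra. }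
     rewrite H5 in H. unfold ustar in H. fold (alpha n) in K1. unfold K1. lra. }
   assert (HQP : P <= Q) by (unfold P, Q; apply Rle_Rpower_l; lra).
   assert (HJr : J m <= J (lambda * r)) by (apply Hm1; nra).
   assert (H2 : K1 <= C * Q * J (lambda * r)).
   { assert (K1 <= C * (P * J m)).
     { unfold C. replace K1 with ((K1 / (P * J m)) * (P * J m)) at 1 by (field; nra).
       apply Rmult_le_compat_r; nra. }
     eapply Rle_trans; [exact H|]. rewrite Rmult_assoc. apply Rmult_le_compat_l; [unfold C; lra|].
     apply Rmult_le_compat; lra. }
   lra.
Qed.
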